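(* The joint policy $\boldsymbol{\pi}^{\text{API}}_{\text{push}}(\beta\mid\boldsymbol{\pi}_{\text{e}}^0)$ returned by the Alternating Policy Iteration (API) scheme started from initial encoder policy $\boldsymbol{\pi}_{\text{e}}^0$ does not always outperform the optimal periodic policy: there exist an instance $\langle\mathcal{S},\mathcal{A},\mathbf{P},r,\gamma,\beta\rangle$ and an initial encoder policy $\boldsymbol{\pi}_{\text{e}}^0$ such that $R_\beta^{\boldsymbol{\pi}^{\text{API}}_{\text{push}}(\beta\mid\boldsymbol{\pi}_{\text{e}}^0)}<R_\beta^{\boldsymbol{\pi}^*_{\text{per}}(\beta)}$.
   Context: Setting: finite state set $\mathcal{S}$, finite control action set $\mathcal{A}$, stochastic matrices $\mathbf{P}^a$ ($a\in\mathcal{A}$), reward $r_{s,s'}(a)$, discount $\gamma\in[0,1)$, communication cost $\beta>0$, initial state distribution. A Markov process evolves as $s_{t+1}\sim P^{a_t}_{s_t,\cdot}$; at each time $t$ either $s_t$ is transmitted to the decoder ($c_t=1$) or not ($c_t=0$); the decoder chooses $a_t=\pi_{\text{d}}(\Delta_t,s_{t-\Delta_t})\in\mathcal{A}$, where $\Delta_t\le T_{\max}$ is the time since the last transmission and $s_{t-\Delta_t}$ the last transmitted state; reward $r_t=r_{s_t,s_{t+1}}(a_t)$. For a joint policy $\boldsymbol{\pi}$, $R_\beta^{\boldsymbol{\pi}}=\mathbb{E}\big[\sum_t\gamma^t(r_t-\beta c_t)\big]$. Periodic policies transmit every $\tau$ steps for a fixed $\tau\in\{0,\dots,T_{\max}\}$;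 $\boldsymbol{\pi}^*_{\text{per}}(\beta)$ maximizes $R_\beta$ over $\tau$ and $\boldsymbol{\pi}_{\text{d}}$. Push-based policies: an encoder observing $s_t$ decides $c_t=\pi_{\text{e}}(s_t,\Delta_t,s_{t-\Delta_t})$. API scheme: from an initial encoder policy $\boldsymbol{\pi}_{\text{e}}^0$, alternately compute the decoder's best response to the current encoder policy (policy iteration over $\langle\Delta,s\rangle$, with the decoder's belief computed by Bayesian updating that conditions on the encoder not having transmitted) and the encoder's best response to the current decoder policy (policy iteration on the MDP with state $\langle s_t,\Delta_t,s_{t-\Delta_t}\rangle$), until neither policy changes; the output is $\boldsymbol{\pi}^{\text{API}}_{\text{push}}(\beta\mid\boldsymbol{\pi}_{\text{e}}^0)$. *)

(* Defs.v *)
From HB Require Import structures.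
From mathcomp Require Import all_boot all_order all_algebra.
From mathcomp Require Import all_classical all_reals all_analysis.
Set Implicit Arguments. Unset Strict Implicit. Unset Printing Implicit Defensive.
Import Order.TTheory GRing.Theory Num.Theory numFieldNormedType.Exports.
Local Open Scope ring_scope.

Section Model.
Variables (R : realType) (S A : finType) (Tmax : nat).
Variables (P : A -> S -> S -> R) (r : S -> S -> A -> R) (gamma beta : R).

(* Pre-decision state at time t: (s_t, d, shat) where shat is the last
   transmitted state and d = Delta_{t-1} + 1 is the age the decoder
   information would have if s_t is NOT transmitted at time t.
   d = Tmax+1 (= ord_max) forces a transmission (so that Delta_t <= Tmax);
   the initial state is (s_0, Tmax+1, s_0), i.e. s_0 is transmitted at t=0. *)
Definition pstate := (S * 'I_Tmax.+2 * S)%type.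

Definition enc_policy := {ffun pstate -> bool}.
Definition dec_policy := {ffun 'I_Tmax.+1 * S -> A}.

Definition transmit (pe : enc_policy) (z : pstate) : bool :=
  (z.1.2 == ord_max) || pe z.
Definition post_age (pe : enc_policy) (z : pstate) : 'I_Tmax.+1 :=
  if transmit pe z then ord0 else inord z.1.2.
Definition post_last (pe : enc_policy) (z : pstate) : S :=
  if transmit pe z then z.1.1 else z.2.
Definition act (pe : enc_policy) (pd : dec_policy) (z : pstate) : A :=
  pd (post_age pe z, post_last pe z).
Definition stage_reward (pe : enc_policy) (pd : dec_policy) (z : pstate) : R :=
  \sum_(s' : S) P (act pe pd z) z.1.1 s' * r z.1.1 s' (act pe pd z)
  - beta * (transmit pe z)%:R.
Definition next_state (pe : enc_policy) (z : pstate) (s' : S) : pstate :=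
  (s', inord (post_age pe z).+1, post_last pe z).
Definition step (pe : enc_policy) (pd : dec_policy) (p : pstate -> R) : pstate -> R :=
  fun z' => \sum_(z : pstate) p z *
     \sum_(s' : S | next_state pe z s' == z') P (act pe pd z) z.1.1 s'.
Definition dist_at pe pd (p0 : pstate -> R) (t : nat) : pstate -> R :=
  iter t (step pe pd) p0.
Definition disc_term pe pd (p0 : pstate -> R) (t : nat) : R :=
  gamma ^+ t * \sum_(z : pstate) dist_at pe pd p0 t z * stage_reward pe pd z.
Definition value pe pd (p0 : pstate -> R) : R := limn (series (disc_term pe pd p0)).

Definition point (z : pstate) : pstate -> R := fun z' => (z' == z)%:R.
Definition start_state (s : S) : pstate := (s, ord_max, s).
Definition init_dist (mu0 : S -> R) : pstate -> R :=
  fun z => mu0 z.1.1 * (z == start_state z.1.1)%:R.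

Definition Rbeta (mu0 : S -> R) pe pd : R := value pe pd (init_dist mu0).

Definition per_enc (tau : 'I_Tmax.+1) : enc_policy := [ffun z : pstate => (tau < z.1.2)%N].
Definition per_optimal (mu0 : S -> R) (tau : 'I_Tmax.+1) (pd : dec_policy) : Prop :=
  forall tau' pd', Rbeta mu0 (per_enc tau') pd' <= Rbeta mu0 (per_enc tau) pd.

Definition dec_BR (pe : enc_policy) (pd : dec_policy) : Prop :=
  forall (s : S) (pd' : dec_policy),
    value pe pd' (point (start_state s)) <= value pe pd (point (start_state s)).
Definition enc_BR (pd : dec_policy) (pe : enc_policy) : Prop :=
  forall (z : pstate) (pe' : enc_policy), (0 < z.1.2)%N ->
    value pe' pd (point z) <= value pe pd (point z).

(* (pe, pd) is an output of API started from pe0: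
   pd_k = BR_d(pe_k), pe_{k+1} = BR_e(pd_k), stopping at the first N >= 1
   at which neither policy changes; output (pe_N, pd_N). *)
Definition API_output (pe0 : enc_policy) (pe : enc_policy) (pd : dec_policy) : Prop :=
  exists (N : nat) (pes : nat -> enc_policy) (pds : nat -> dec_policy),
    [/\ pes 0%N = pe0,
        ((forall k, (k <= N)%N -> dec_BR (pes k) (pds k)) /\
        (forall k, (k < N)%N -> enc_BR (pds k) (pes k.+1))),
        [/\ (0 < N)%N, pes N = pes N.-1 & pds N = pds N.-1],
        (forall k, (0 < k < N)%N -> ~ (pes k = pes k.-1 /\ pds k = pds k.-1))
      & (pe = pes N /\ pd = pds N)].

End Model.

Definition stochastic (R : realType) (S A : finType) (P : A -> S -> S -> R) : Prop :=
  (forall a s s', 0 <= P a s s') /\ (forall a s, \sum_(s' : S) P a s s' = 1).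
Definition prob_dist (R : realType) (S : finType) (mu : S -> R) : Prop :=
  (forall s, 0 <= mu s) /\ \sum_(s : S) mu s = 1.

(* Main.v *)
Require Import Defs.
From HB Require Import structures.
From mathcomp Require Import all_boot all_order all_algebra.
From mathcomp Require Import all_classical all_reals all_analysis.
From mathcomp Require Import ring lra.
Import Order.TTheory GRing.Theory Num.Theory numFieldNormedType.Exports.
Local Open Scope ring_scope.

Definition ip {R : realType} {S : finType} {Tmax : nat} (p V : pstate S Tmax -> R) : R :=
  \sum_z p z * V z.

Lemma step_lin {R : realType} {S A : finType} {Tmax : nat} (P : A -> S -> S -> R) pe pd
  (p V : pstate S Tmax -> R) :
  ip (step P pe pd p) V =
  \sum_z p z * \sum_s' P (act pe pd z) z.1.1 s' * V (next_state pe z s').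
Proof.
rewrite /ip /step.
under eq_bigr do rewrite mulr_suml.
rewrite exchange_big /=; apply: eq_bigr => z _.
under eq_bigr do rewrite -mulrA.
rewrite -mulr_sumr; congr (_ * _).
transitivity (\sum_i \sum_(s' | next_state pe z s' == i) P (act pe pd z) z.1.1 s' * V i).
  apply: eq_bigr => i _. by rewrite mulr_suml.
rewrite (exchange_big_dep xpredT) //=.
apply: eq_bigr => s' _.
rewrite (big_pred1 (next_state pe z s')) //.
Qed.

Definition Bell {R : realType} {S A : finType} {Tmax : nat} (P : A -> S -> S -> R) r gamma beta
  pe pd (V : pstate S Tmax -> R) z :=
  stage_reward P r beta pe pd z +
  gamma * \sum_s' P (act pe pd z) z.1.1 s' * V (next_state pe z s').

Lemma ip_sub {R : realType} {S : finType} {Tmax : nat} (p f g : pstate S Tmax -> R) :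
  ip p (fun z => f z - g z) = ip p f - ip p g.
Proof. by rewrite /ip -sumrB; apply: eq_bigr => z _; rewrite mulrBr. Qed.

Lemma ident {R : realType} {S A : finType} {Tmax : nat} (P : A -> S -> S -> R) r gamma beta
  pe pd p0 (V : pstate S Tmax -> R) n :
  series (disc_term P r gamma beta pe pd p0) n =
  ip p0 V - gamma ^+ n * ip (dist_at P pe pd p0 n) V
  - \sum_(t < n) gamma ^+ t * ip (dist_at P pe pd p0 t)
        (fun z => V z - Bell P r gamma beta pe pd V z).
Proof.
elim: n => [|n IH].
  by rewrite /series /= big_geq // big_ord0 expr0 mul1r subrr subr0.
rewrite seriesSr IH big_ord_recr /= ip_sub.
have -> : ip (dist_at P pe pd p0 n) (Bell P r gamma beta pe pd V) =
  ip (dist_at P pe pd p0 n) (stage_reward P r beta pe pd) +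
  gamma * ip (step P pe pd (dist_at P pe pd p0 n)) V.
  rewrite step_lin /ip mulr_sumr -big_split /=; apply: eq_bigr => z _.
  by rewrite /Bell mulrDr mulrCA.
rewrite /disc_term exprS.
rewrite -/(ip (dist_at P pe pd p0 n) (stage_reward P r beta pe pd)).
ring.
Qed.

Lemma dist_ge0 {R : realType} {S A : finType} {Tmax : nat} (P : A -> S -> S -> R) pe pd
  (p0 : pstate S Tmax -> R) :
  (forall a s s', 0 <= P a s s') -> (forall z, 0 <= p0 z) ->
  forall t z, 0 <= dist_at P pe pd p0 t z.
Proof.
move=> HP H0; elim=> [|t IH] z //=.
rewrite /step sumr_ge0 // => z' _; rewrite mulr_ge0 // sumr_ge0 //.
Qed.

Lemma dist_mass {R : realType} {S A : finType} {Tmax : nat} (P : A -> S -> S -> R) pe pd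
  (p0 : pstate S Tmax -> R) :
  (forall a s, \sum_s' P a s s' = 1) ->
  forall t, \sum_z dist_at P pe pd p0 t z = \sum_z p0 z.
Proof.
move=> HP; elim=> [|t IH] //=.
have := step_lin P pe pd (dist_at P pe pd p0 t) (fun _ => 1).
rewrite /ip => E.
transitivity (\sum_z step P pe pd (dist_at P pe pd p0 t) z * 1).
  by apply: eq_bigr => z _; rewrite mulr1.
rewrite E -IH; apply: eq_bigr => z _.
rewrite (eq_bigr (fun s' => P (act pe pd z) z.1.1 s')) ?HP ?mulr1 // => s' _.
by rewrite mulr1.
Qed.

Lemma dist_d0 {R : realType} {S A : finType} {Tmax : nat} (P : A -> S -> S -> R) pe pd
  (p0 : pstate S Tmax -> R) :
  (forall z, nat_of_ord z.1.2 = 0%N -> p0 z = 0) ->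
  forall t z, nat_of_ord z.1.2 = 0%N -> dist_at P pe pd p0 t z = 0.
Proof.
move=> H0; elim=> [|t IH] z Hz /=; first exact: H0.
rewrite /step big1 // => z' _.
rewrite big_pred0 ?mulr0 // => s'.
apply/negP => /eqP E; move: Hz; rewrite -E /= inordK //.
by rewrite ltnS (leq_trans (ltn_ord _)).
Qed.

Lemma ip_bound {R : realType} {S : finType} {Tmax : nat} (p f : pstate S Tmax -> R) M :
  (forall z, 0 <= p z) -> \sum_z p z = 1 -> (forall z, `|f z| <= M) ->
  `|ip p f| <= M.
Proof.
move=> H0 H1 Hf; rewrite /ip (le_trans (ler_norm_sum _ _ _)) //.
apply: (@le_trans _ _ (\sum_z p z * M)).
  apply: ler_sum => z _; rewrite normrM ger0_norm //; exact: ler_wpM2l.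
by rewrite -mulr_suml H1 mul1r.
Qed.

Lemma value_cvg {R : realType} {S A : finType} {Tmax : nat} (P : A -> S -> S -> R) r (gamma beta : R)
  pe pd (p0 : pstate S Tmax -> R) (M : R) :
  (forall a s s', 0 <= P a s s') -> (forall a s, \sum_s' P a s s' = 1) ->
  (forall z, 0 <= p0 z) -> \sum_z p0 z = 1 -> 0 <= gamma < 1 -> 0 <= M ->
  (forall z, `|stage_reward P r beta pe pd z| <= M) ->
  cvgn (series (disc_term P r gamma beta pe pd p0)).
Proof.
move=> HP1 HP2 H0 H1 /andP[g0 g1] M0 HM.
apply: normed_cvg.
apply: (@series_le_cvg _ (fun n => `|disc_term P r gamma beta pe pd p0 n|) (geometric M gamma)).
- by move=> n.
- by move=> n; rewrite /geometric /= mulr_ge0 // exprn_ge0.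
- move=> n; rewrite /disc_term /geometric /= normrM ger0_norm ?exprn_ge0 // mulrC.
  apply: ler_wpM2r; first exact: exprn_ge0.
  apply: ip_bound => //; first exact: dist_ge0.
  by rewrite dist_mass.
- by apply: is_cvg_geometric_series; rewrite ger0_norm.
Qed.

Lemma value_ub {R : realType} {S A : finType} {Tmax : nat} (P : A -> S -> S -> R) r (gamma beta : R)
  pe pd (p0 : pstate S Tmax -> R) (M K : R) (V : pstate S Tmax -> R) m :
  (forall a s s', 0 <= P a s s') -> (forall a s, \sum_s' P a s s' = 1) ->
  (forall z, 0 <= p0 z) -> \sum_z p0 z = 1 ->
  (forall z, nat_of_ord z.1.2 = 0%N -> p0 z = 0) -> 0 <= gamma < 1 -> 0 <= M ->
  (forall z, `|stage_reward P r beta pe pd z| <= M) ->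
  (forall z, `|V z| <= K) ->
  (forall z, (0 < nat_of_ord z.1.2)%N -> Bell P r gamma beta pe pd V z <= V z) ->
  value P r gamma beta pe pd p0 <= ip p0 V -
    \sum_(t < m) gamma ^+ t * ip (dist_at P pe pd p0 t)
        (fun z => V z - Bell P r gamma beta pe pd V z).
Proof.
move=> HP1 HP2 H0 H1 Hd0 /andP[g0 g1] M0 HM HK Herr.
set E := fun n => \sum_(t < n) gamma ^+ t * ip (dist_at P pe pd p0 t)
        (fun z => V z - Bell P r gamma beta pe pd V z).
have Et : forall t, 0 <= gamma ^+ t * ip (dist_at P pe pd p0 t)
        (fun z => V z - Bell P r gamma beta pe pd V z).
  move=> t; rewrite mulr_ge0 ?exprn_ge0 // /ip sumr_ge0 // => z _.
  case: (posnP (nat_of_ord z.1.2)) => Hz.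
    by rewrite dist_d0 // mul0r.
  by rewrite mulr_ge0 ?subr_ge0 ?Herr //; apply: dist_ge0.
have Emono : forall k, E m <= E (m + k)%N.
  elim=> [|k IH]; first by rewrite addn0.
  by rewrite addnS /E big_ord_recr /= (le_trans IH) // lerDl.
have gg : 0 <= gamma < 1 by rewrite g0 g1.
have cv := value_cvg P r gamma beta pe pd p0 M HP1 HP2 H0 H1 gg M0 HM.
have gl : `|gamma| < 1 by rewrite ger0_norm.
have := ler_cvg_to cv (cvgD (cvg_cst (ip p0 V - E m)) (cvg_geometric K gl)).
rewrite addr0; apply.
near=> n.
have Hn : (m <= n)%N by near: n; exists m.
rewrite (ident P r gamma beta pe pd p0 V n) -/(E n) /geometric /=.
have hE : E m <= E n by rewrite -(subnKC Hn); exact: Emono.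
have h1 : `|ip (dist_at P pe pd p0 n) V| <= K.
  by apply: ip_bound => //; [exact: dist_ge0 | rewrite dist_mass].
have h2 : - (gamma ^+ n * ip (dist_at P pe pd p0 n) V) <= K * gamma ^+ n.
  rewrite -mulrN mulrC; apply: ler_wpM2r; first exact: exprn_ge0.
  by rewrite (le_trans (ler_norm _)) // normrN.
change (ip p0 V - gamma ^+ n * ip (dist_at P pe pd p0 n) V - E n <= (ip p0 V - E m) + K * gamma ^+ n). lra.
Unshelve. all: by end_near.
Qed.

Lemma value_eq {R : realType} {S A : finType} {Tmax : nat} (P : A -> S -> S -> R) r (gamma beta : R)
  pe pd (p0 : pstate S Tmax -> R) (M K : R) (V : pstate S Tmax -> R) :
  (forall a s s', 0 <= P a s s') -> (forall a s, \sum_s' P a s s' = 1) ->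
  (forall z, 0 <= p0 z) -> \sum_z p0 z = 1 ->
  (forall z, nat_of_ord z.1.2 = 0%N -> p0 z = 0) -> 0 <= gamma < 1 -> 0 <= M ->
  (forall z, `|stage_reward P r beta pe pd z| <= M) ->
  (forall z, `|V z| <= K) ->
  (forall z, (0 < nat_of_ord z.1.2)%N -> Bell P r gamma beta pe pd V z = V z) ->
  value P r gamma beta pe pd p0 = ip p0 V.
Proof.
move=> HP1 HP2 H0 H1 Hd0 gg M0 HM HK Herr.
apply/le_anti/andP; split.
  have := value_ub P r gamma beta pe pd p0 M K V 0 HP1 HP2 H0 H1 Hd0 gg M0 HM HK.
  rewrite big_ord0 subr0; apply => z Hz; by rewrite Herr.
move: gg => /andP[g0 g1].
have gg : 0 <= gamma < 1 by rewrite g0 g1.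
have cv := value_cvg P r gamma beta pe pd p0 M HP1 HP2 H0 H1 gg M0 HM.
have gl : `|gamma| < 1 by rewrite ger0_norm.
have := ler_cvg_to (cvgB (cvg_cst (ip p0 V)) (cvg_geometric K gl)) cv.
rewrite subr0; apply.
near=> n.
rewrite (ident P r gamma beta pe pd p0 V n).
have -> : \sum_(t < n) gamma ^+ t * ip (dist_at P pe pd p0 t)
        (fun z => V z - Bell P r gamma beta pe pd V z) = 0.
  apply: big1 => t _; rewrite /ip big1 ?mulr0 // => z _.
  case: (posnP (nat_of_ord z.1.2)) => Hz.
    by rewrite dist_d0 // mul0r.
  by rewrite Herr // subrr mulr0.
have h1 : `|ip (dist_at P pe pd p0 n) V| <= K.
  by apply: ip_bound => //; [exact: dist_ge0 | rewrite dist_mass].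
have h2 : gamma ^+ n * ip (dist_at P pe pd p0 n) V <= K * gamma ^+ n.
  rewrite mulrC; apply: ler_wpM2r; first exact: exprn_ge0.
  by rewrite (le_trans (ler_norm _)).
change (ip p0 V - K * gamma ^+ n <= ip p0 V - gamma ^+ n * ip (dist_at P pe pd p0 n) V - 0).
lra.
Unshelve. all: by end_near.
Qed.

Lemma sum_ge_term {R : realType} {I : finType} (F : I -> R) (Q : pred I) i :
  (forall j, 0 <= F j) -> Q i -> F i <= \sum_(j | Q j) F j.
Proof.
move=> H Qi; rewrite (bigD1 i) //= lerDl sumr_ge0 //.
Qed.

Lemma step_ge {R : realType} {S A : finType} {Tmax : nat} (P : A -> S -> S -> R) pe pd
  (p : pstate S Tmax -> R) z0 s1 :
  (forall a s s', 0 <= P a s s') -> (forall z, 0 <= p z) ->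
  p z0 * P (act pe pd z0) z0.1.1 s1 <= step P pe pd p (next_state pe z0 s1).
Proof.
move=> HP H0; rewrite /step.
apply: (le_trans _ (sum_ge_term (fun z => p z * \sum_(s' | next_state pe z s' == next_state pe z0 s1) P (act pe pd z) z.1.1 s') xpredT z0 _ _)) => //.
- apply: ler_wpM2l => //.
  exact: (sum_ge_term (fun s' => P (act pe pd z0) z0.1.1 s') (fun s' => next_state pe z0 s' == next_state pe z0 s1) s1).
- by move=> z; rewrite mulr_ge0 // sumr_ge0.
Qed.

Definition Pc (R : realType) : bool -> bool -> bool -> R :=
  fun a s s' => if s' then 3 / 4 else 1 / 4.
Definition rc (R : realType) : bool -> bool -> bool -> R :=
  fun s s' a => (a == s)%:R.
Definition hf (R : realType) : R := 1 / 2.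
Definition mu0 (R : realType) : bool -> R := fun s => if s then 1 else 0.
Definition pe0 : enc_policy bool 1 := [ffun z => z.1.1].
Definition pd0 : dec_policy bool bool 1 := [ffun k => if nat_of_ord k.1 == 0%N then k.2 else false].
Definition pdp : dec_policy bool bool 1 := [ffun k => if nat_of_ord k.1 == 0%N then k.2 else true].
Definition V0 (R : realType) : pstate bool 1 -> R :=
  fun z => if (nat_of_ord z.1.2 == 1%N) && ~~ z.1.1 then 14 / 9 else 10 / 9.
Definition Vp (R : realType) : pstate bool 1 -> R :=
  fun z => if nat_of_ord z.1.2 == 1%N then (if z.1.1 then 19 / 12 else 7 / 12) else 7 / 6.
Definition inE (pe : enc_policy bool 1) := forall z : pstate bool 1, nat_of_ord z.1.2 = 1%N -> pe z = z.1.1.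

Lemma transmitE (pe : enc_policy bool 1) z : transmit pe z = (nat_of_ord z.1.2 == 2%N) || pe z.
Proof. by []. Qed.

Lemma post_ageE (pe : enc_policy bool 1) z :
  nat_of_ord (post_age pe z) = if transmit pe z then 0%N else nat_of_ord z.1.2.
Proof.
rewrite /post_age; case: ifP => // Ht; apply: inordK.
move: Ht; rewrite transmitE; case: z => [[s d] sh] /=.
by case: d => [[|[|[|k]]] Hd].
Qed.

Lemma next_ageE (pe : enc_policy bool 1) z s' :
  nat_of_ord (next_state pe z s').1.2 = (if transmit pe z then 0%N else nat_of_ord z.1.2).+1.
Proof.
rewrite -post_ageE /next_state /=; apply: inordK.
by rewrite ltnS; case: (post_age pe z) => [[|[|k]] Hk].
Qed.

Lemma stageE (R : realType) pe pd (z : pstate bool 1) :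
  stage_reward (Pc R) (rc R) (hf R) pe pd z =
  (act pe pd z == z.1.1)%:R - hf R * (transmit pe z)%:R.
Proof.
rewrite /stage_reward big_bool /Pc /rc /=; lra.
Qed.

Lemma BellE (R : realType) pe pd (V : pstate bool 1 -> R) z :
  Bell (Pc R) (rc R) (hf R) (hf R) pe pd V z =
  (act pe pd z == z.1.1)%:R - hf R * (transmit pe z)%:R +
  hf R * (3 / 4 * V (next_state pe z true) + 1 / 4 * V (next_state pe z false)).
Proof. by rewrite /Bell stageE big_bool /Pc. Qed.

Lemma d12 (z : pstate bool 1) : (0 < nat_of_ord z.1.2)%N -> nat_of_ord z.1.2 = 1%N \/ nat_of_ord z.1.2 = 2%N.
Proof. by case: z => [[s [[|[|[|k]]] Hd]] sh] //= _; [left|right]. Qed.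

Lemma Bell_V0 (R : realType) pe pd (z : pstate bool 1) : (0 < nat_of_ord z.1.2)%N ->
  Bell (Pc R) (rc R) (hf R) (hf R) pe pd (V0 R) z =
  (act pe pd z == z.1.1)%:R - hf R * (transmit pe z)%:R +
  hf R * (if transmit pe z then 11 / 9 else 10 / 9).
Proof.
move=> Hz; rewrite BellE /V0 /= (next_ageE pe z true).
case: (transmit pe z) => /=.
  rewrite /hf; lra.
rewrite andbF andbT eqSS; move: Hz; rewrite lt0n => /negbTE ->; rewrite /hf; lra.
Qed.

Lemma Bell_Vp (R : realType) pe pd (z : pstate bool 1) : (0 < nat_of_ord z.1.2)%N ->
  Bell (Pc R) (rc R) (hf R) (hf R) pe pd (Vp R) z =
  (act pe pd z == z.1.1)%:R - hf R * (transmit pe z)%:R +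
  hf R * (if transmit pe z then 4 / 3 else 7 / 6).
Proof.
move=> Hz; rewrite BellE /Vp /= (next_ageE pe z true).
case: (transmit pe z) => /=.
  rewrite /hf; lra.
rewrite eqSS (negbTE (lt0n_neq0 Hz)); rewrite /hf; lra.
Qed.

Lemma act_pd0 pe (z : pstate bool 1) : (0 < nat_of_ord z.1.2)%N ->
  act pe pd0 z = if transmit pe z then z.1.1 else false.
Proof.
move=> Hz; rewrite /act /pd0 ffunE /= post_ageE /post_last.
by case: (transmit pe z) => //=; rewrite (negbTE (lt0n_neq0 Hz)).
Qed.

Lemma act_pdp pe (z : pstate bool 1) : (0 < nat_of_ord z.1.2)%N ->
  act pe pdp z = if transmit pe z then z.1.1 else true.
Proof.
move=> Hz; rewrite /act /pdp ffunE /= post_ageE /post_last.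
by case: (transmit pe z) => //=; rewrite (negbTE (lt0n_neq0 Hz)).
Qed.

Lemma V0_cases (R : realType) (z : pstate bool 1) : (0 < nat_of_ord z.1.2)%N ->
  (nat_of_ord z.1.2 = 2%N /\ V0 R z = 10 / 9) \/
  (nat_of_ord z.1.2 = 1%N /\ V0 R z = if z.1.1 then 10 / 9 else 14 / 9).
Proof.
move=> Hz; rewrite /V0; case: (d12 z Hz) => ->; [right|left] => //.
by case: z.1.1.
Qed.

Lemma nb (R : realType) (b : bool) : (b%:R : R) = if b then 1 else 0.
Proof. by case: b. Qed.

Lemma bellA (R : realType) pe z : inE pe -> (0 < nat_of_ord z.1.2)%N ->
  Bell (Pc R) (rc R) (hf R) (hf R) pe pd0 (V0 R) z = V0 R z.
Proof.
move=> HE Hz; rewrite Bell_V0 // act_pd0 // transmitE /hf.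
case: (V0_cases R z Hz) => [[H1 ->]|[H1 ->]]; rewrite H1 /=.
  by rewrite eqxx ?nb; lra.
rewrite HE //; case: z.1.1 => /=; rewrite ?nb; lra.
Qed.

Lemma bellB (R : realType) pe pd z : inE pe -> (0 < nat_of_ord z.1.2)%N ->
  Bell (Pc R) (rc R) (hf R) (hf R) pe pd (V0 R) z <= V0 R z.
Proof.
move=> HE Hz; rewrite Bell_V0 // transmitE /hf.
case: (act pe pd z == z.1.1);
case: (V0_cases R z Hz) => [[H1 ->]|[H1 ->]]; rewrite H1 /= ?HE //;
  try (case: z.1.1 => /=); rewrite ?nb; lra.
Qed.

Lemma bellC (R : realType) pe z : (0 < nat_of_ord z.1.2)%N ->
  Bell (Pc R) (rc R) (hf R) (hf R) pe pd0 (V0 R) z <= V0 R z.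
Proof.
move=> Hz; rewrite Bell_V0 // act_pd0 // transmitE /hf.
case: (V0_cases R z Hz) => [[H1 ->]|[H1 ->]]; rewrite H1 /=.
  by rewrite eqxx ?nb; lra.
case: (pe z); case: z.1.1 => /=; rewrite ?nb; lra.
Qed.

Lemma bellD (R : realType) z : (0 < nat_of_ord z.1.2)%N ->
  Bell (Pc R) (rc R) (hf R) (hf R) (per_enc bool (ord_max : 'I_2)) pdp (Vp R) z = Vp R z.
Proof.
move=> Hz; rewrite Bell_Vp // act_pdp // transmitE /per_enc ffunE /Vp /hf.
case: (d12 z Hz) => -> /=.
  by case: z.1.1 => /=; rewrite ?nb; lra.
by rewrite eqxx ?nb; lra.
Qed.

Lemma Pc_ge0 (R : realType) a s s' : 0 <= Pc R a s s'.
Proof. by rewrite /Pc; case: s'; lra. Qed.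

Lemma Pc_sum (R : realType) a s : \sum_s' Pc R a s s' = 1.
Proof. by rewrite big_bool /Pc /=; lra. Qed.

Lemma stage_bound (R : realType) (pe : enc_policy bool 1) (pd : dec_policy bool bool 1) z :
  `|stage_reward (Pc R) (rc R) (hf R) pe pd z| <= 1.
Proof.
rewrite stageE ler_norml /hf.
by case: (act pe pd z == z.1.1); case: (transmit pe z); rewrite ?nb; lra.
Qed.

Lemma V0_bound (R : realType) z : `|V0 R z| <= 2.
Proof. by rewrite /V0; case: ifP => _; rewrite ler_norml; lra. Qed.

Lemma Vp_bound (R : realType) z : `|Vp R z| <= 2.
Proof. by rewrite /Vp; case: ifP => _; try case: ifP => _; rewrite ler_norml; lra. Qed.

Lemma pt_ge0 (R : realType) (z0 : pstate bool 1) z : 0 <= Defs.point R z0 z.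
Proof. by rewrite /Defs.point; case: (z == z0); rewrite ?nb; lra. Qed.

Lemma ip_pt (R : realType) (z0 : pstate bool 1) f : ip (Defs.point R z0) f = f z0.
Proof.
rewrite /ip (bigD1 z0) //= /Defs.point eqxx mul1r big1 ?addr0 // => z /negbTE ->.
by rewrite mul0r.
Qed.

Lemma pt_sum (R : realType) (z0 : pstate bool 1) : \sum_z Defs.point R z0 z = 1.
Proof.
have := ip_pt R z0 (fun _ => 1); rewrite /ip => <-.
by apply: eq_bigr => z _; rewrite mulr1.
Qed.

Lemma pt_d0 (R : realType) (z0 : pstate bool 1) : (0 < nat_of_ord z0.1.2)%N ->
  forall z, nat_of_ord z.1.2 = 0%N -> Defs.point R z0 z = 0.
Proof.
move=> H z Hz; rewrite /Defs.point; case: eqP => // E.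
by move: H; rewrite -E Hz.
Qed.

Lemma ip_init (R : realType) (f : pstate bool 1 -> R) :
  ip (init_dist (mu0 R)) f = f (start_state 1 true).
Proof.
rewrite /ip (bigD1 (start_state 1 true)) //= /init_dist /mu0 /= !mul1r.
rewrite big1 ?addr0 // => [[[s d] sh]] /= Hne.
case: s Hne => /= Hne; last by rewrite !mul0r.
by rewrite (negbTE Hne) mulr0 mul0r.
Qed.

Lemma init_ge0 (R : realType) (z : pstate bool 1) : 0 <= init_dist (mu0 R) z.
Proof. by rewrite /init_dist /mu0; case: z.1.1; case: (_ == _); rewrite ?nb; lra. Qed.

Lemma init_sum (R : realType) : \sum_(z : pstate bool 1) init_dist (mu0 R) z = 1 :> R.
Proof.
have := ip_init R (fun _ => 1); rewrite /ip => <-.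
by apply: eq_bigr => z _; rewrite mulr1.
Qed.

Lemma init_d0 (R : realType) (z : pstate bool 1) : nat_of_ord z.1.2 = 0%N -> init_dist (mu0 R) z = 0 :> R.
Proof.
move=> Hz; rewrite /init_dist; case: eqP => [E|]; last by rewrite mulr0.
by move: Hz; rewrite E.
Qed.

Definition good {R : realType} (p0 : pstate bool 1 -> R) :=
  [/\ forall z, 0 <= p0 z, \sum_z p0 z = 1 & forall z, nat_of_ord z.1.2 = 0%N -> p0 z = 0].

Lemma good_pt (R : realType) z0 : (0 < nat_of_ord z0.1.2)%N -> good (Defs.point R z0).
Proof. by move=> H; split; [exact: pt_ge0 | exact: pt_sum | exact: pt_d0]. Qed.

Lemma good_init (R : realType) : good (init_dist (mu0 R)).
Proof. by split; [exact: init_ge0 | exact: init_sum | exact: init_d0]. Qed.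

Lemma g_range (R : realType) : 0 <= hf R < 1.
Proof. by rewrite /hf; apply/andP; split; lra. Qed.

Lemma val_eq0 (R : realType) pe (p0 : pstate bool 1 -> R) : inE pe -> good p0 ->
  value (Pc R) (rc R) (hf R) (hf R) pe pd0 p0 = ip p0 (V0 R).
Proof.
move=> HE [H0 H1 H2].
apply: (value_eq _ _ _ _ _ _ _ 1 2) => //; try exact: Pc_ge0; try exact: Pc_sum.
- exact: g_range.
- exact: stage_bound.
- exact: V0_bound.
- by move=> z Hz; apply: bellA.
Qed.

Lemma val_per (R : realType) (p0 : pstate bool 1 -> R) : good p0 ->
  value (Pc R) (rc R) (hf R) (hf R) (per_enc bool (ord_max : 'I_2)) pdp p0 = ip p0 (Vp R).
Proof.
move=> [H0 H1 H2].
apply: (value_eq _ _ _ _ _ _ _ 1 2) => //; try exact: Pc_ge0; try exact: Pc_sum.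
- exact: g_range.
- exact: stage_bound.
- exact: Vp_bound.
- by move=> z Hz; apply: bellD.
Qed.

Lemma val_ub (R : realType) pe pd (p0 : pstate bool 1 -> R) m :
  (forall z, (0 < nat_of_ord z.1.2)%N -> Bell (Pc R) (rc R) (hf R) (hf R) pe pd (V0 R) z <= V0 R z) ->
  good p0 ->
  value (Pc R) (rc R) (hf R) (hf R) pe pd p0 <= ip p0 (V0 R) -
    \sum_(t < m) hf R ^+ t * ip (dist_at (Pc R) pe pd p0 t)
        (fun z => V0 R z - Bell (Pc R) (rc R) (hf R) (hf R) pe pd (V0 R) z).
Proof.
move=> HB [H0 H1 H2].
apply: (value_ub _ _ _ _ _ _ _ 1 2) => //; try exact: Pc_ge0; try exact: Pc_sum.
- exact: g_range.
- exact: stage_bound.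
- exact: V0_bound.
Qed.

Lemma inE_pe0 : inE pe0.
Proof. by move=> z _; rewrite /pe0 ffunE. Qed.

Lemma start_d (s : bool) : nat_of_ord (start_state 1 s).1.2 = 2%N.
Proof. by []. Qed.

Lemma decBR0 (R : realType) pe : inE pe -> dec_BR (Pc R) (rc R) (hf R) (hf R) pe pd0.
Proof.
move=> HE s pd'.
rewrite val_eq0 //; last exact: good_pt.
apply: (le_trans (val_ub R pe pd' (Defs.point R (start_state 1 s)) 0 _ _)); last by rewrite big_ord0 subr0.
- by move=> z Hz; apply: bellB.
- exact: good_pt.
Qed.

Lemma encBR0 (R : realType) : enc_BR (Pc R) (rc R) (hf R) (hf R) pd0 pe0.
Proof.
move=> z pe' Hz.
rewrite (val_eq0 R pe0 (Defs.point R z) inE_pe0 (good_pt R z Hz)).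
apply: (le_trans (val_ub R pe' pd0 (Defs.point R z) 0 _ _)); last by rewrite big_ord0 subr0.
- by move=> z' Hz'; apply: bellC.
- exact: good_pt.
Qed.

Lemma enc_unique (R : realType) pe : enc_BR (Pc R) (rc R) (hf R) (hf R) pd0 pe -> inE pe.
Proof.
move=> HB z Hz1; apply/eqP/negPn/negP => Hne.
have Hz : (0 < nat_of_ord z.1.2)%N by rewrite Hz1.
have := HB z pe0 Hz.
rewrite (val_eq0 R pe0 (Defs.point R z) inE_pe0 (good_pt R z Hz)) ip_pt.
have := val_ub R pe pd0 (Defs.point R z) 1 (fun z' Hz' => bellC R pe z' Hz') (good_pt R z Hz).
rewrite big_ord1 expr0 mul1r /= !ip_pt Bell_V0 // act_pd0 // transmitE Hz1 /=.
rewrite /V0 Hz1 /= /hf.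
have Hp : pe z = ~~ z.1.1 by move: Hne; case: (pe z); case: (z.1.1).
rewrite Hp; case: (z.1.1) => /=; rewrite ?nb; lra.
Qed.

Lemma dec_unique (R : realType) pe pd : inE pe ->
  dec_BR (Pc R) (rc R) (hf R) (hf R) pe pd -> pd = pd0.
Proof.
move=> HE HB; apply/ffunP => -[k sh]; apply/eqP/negPn/negP => Hne.
set z0 : pstate bool 1 := start_state 1 sh.
have Hz0 : (0 < nat_of_ord z0.1.2)%N by [].
have HBB : forall z, (0 < nat_of_ord z.1.2)%N ->
    Bell (Pc R) (rc R) (hf R) (hf R) pe pd (V0 R) z <= V0 R z.
  by move=> z Hz; apply: bellB.
have := HB sh pd0.
rewrite (val_eq0 R pe (Defs.point R z0) HE (good_pt R z0 Hz0)) ip_pt.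
have Ht0 : transmit pe z0 by [].
case: k Hne => [[|[|k']] Hk] Hne //.
- have := val_ub R pe pd (Defs.point R z0) 1 HBB (good_pt R z0 Hz0).
  rewrite big_ord1 expr0 mul1r /= !ip_pt Bell_V0 // Ht0.
  have Ha : act pe pd z0 = pd (Ordinal Hk, sh).
    by rewrite /act /post_age /post_last Ht0; congr (pd (_, _)); apply: val_inj.
  rewrite Ha; move: Hne; rewrite /pd0 ffunE /=.
  rewrite /V0 /= /hf.
  by move=> /negbTE ->; rewrite ?nb; lra.
- move=> H2; rewrite -/z0 in H2.
  have := val_ub R pe pd (Defs.point R z0) 2 HBB (good_pt R z0 Hz0).
  rewrite big_ord_recr big_ord1 expr0 expr1 mul1r.
  rewrite (_ : dist_at (Pc R) pe pd (Defs.point R z0) 0 = Defs.point R z0) //.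
  rewrite (_ : dist_at (Pc R) pe pd (Defs.point R z0) 1 = step (Pc R) pe pd (Defs.point R z0)) //.
  rewrite !ip_pt.
  set err := fun z => V0 R z - Bell (Pc R) (rc R) (hf R) (hf R) pe pd (V0 R) z.
  set D := step (Pc R) pe pd (Defs.point R z0).
  have e0 : 0 <= err z0 by rewrite /err subr_ge0 HBB.
  set z1 := next_state pe z0 false.
  have Dge0 : forall z, 0 <= D z * err z.
    move=> z; case: (posnP (nat_of_ord z.1.2)) => Hz.
      move: (dist_d0 (Pc R) pe pd (Defs.point R z0) (pt_d0 R z0 Hz0) 1 z Hz) => /= E.
      by rewrite /D E mul0r.
    rewrite mulr_ge0 // /err ?subr_ge0 ?HBB //.
    exact: (dist_ge0 (Pc R) pe pd (Defs.point R z0) (Pc_ge0 R) (pt_ge0 R z0) 1 z).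
  have hD : ip D err >= D z1 * err z1 by apply: (sum_ge_term (fun z => D z * err z) xpredT z1).
  have hD1 : 1 / 4 <= D z1.
    have := step_ge (Pc R) pe pd (Defs.point R z0) z0 false (Pc_ge0 R) (pt_ge0 R z0).
    move=> H; apply: le_trans H; rewrite /Defs.point eqxx ?nb /Pc /=; lra.
  have Hz1a : nat_of_ord z1.1.2 = 1%N by rewrite /z1 next_ageE Ht0.
  have Hz1s : z1.1.1 = false by [].
  have Ht1 : transmit pe z1 = false by rewrite transmitE Hz1a /= HE.
  have Ha : act pe pd z1 = pd (Ordinal Hk, sh).
    rewrite /act /post_last Ht1; congr (pd (_, _)); apply: val_inj.
    by rewrite /= post_ageE Ht1 Hz1a.
  have e1 : err z1 = 1.
    rewrite /err Bell_V0 ?Hz1a // Ht1 Ha /V0 Hz1a Hz1s /=.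
    move: Hne; rewrite /pd0 ffunE /= /hf.
    by case: (pd _) => /=; rewrite ?nb; lra.
  have hpos : 0 < hf R * ip D err.
    rewrite e1 in hD; apply: mulr_gt0; rewrite /hf; lra.
  move=> H1.
  have H1' : value (Pc R) (rc R) (hf R) (hf R) pe pd (Defs.point R z0) <=
     V0 R z0 - (err z0 + hf R * ip D err) by exact: H1.
  have := le_trans H2 H1'.
  lra.
Qed.

Theorem lemma3 (R : realType) :
  exists (S A : finType) (Tmax : nat) (P : A -> S -> S -> R)
         (r : S -> S -> A -> R) (gamma beta : R) (mu0 : S -> R)
         (pe0 : enc_policy S Tmax),
    [/\ stochastic P, 0 <= gamma < 1, 0 < beta /\ prob_dist mu0,
        (exists pe pd, API_output P r gamma beta pe0 pe pd)
      & forall pe pd, API_output P r gamma beta pe0 pe pd ->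
          forall (tau : 'I_Tmax.+1) (pd' : dec_policy S A Tmax), per_optimal P r gamma beta mu0 tau pd' ->
            Rbeta P r gamma beta mu0 pe pd < Rbeta P r gamma beta mu0 (per_enc S tau) pd'].
Proof.
exists bool, bool, 1%N, (Pc R), (rc R), (hf R), (hf R), (mu0 R), pe0.
split.
- by split; [exact: Pc_ge0 | exact: Pc_sum].
- exact: g_range.
- split; first by rewrite /hf; lra.
  split; first by case; rewrite /mu0; lra.
  by rewrite big_bool /mu0 /=; lra.
- exists pe0, pd0, 1%N, (fun _ => pe0), (fun _ => pd0); split => //.
  + split=> k _; [exact: decBR0 inE_pe0 | exact: encBR0].
  + by move=> k /andP[H1 H2]; move: H1 H2; case: k.
- move=> pe pd [N [pes [pds [H0 [Hd He] [HN _ _] _ [-> ->]]]]] tau pd' Hopt.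
  have Hinv : forall k, (k <= N)%N -> inE (pes k).
    elim=> [|k IH] Hk; first by rewrite H0; exact: inE_pe0.
    have Hk' : (k <= N)%N by apply: ltnW.
    have Hpd := dec_unique R (pes k) (pds k) (IH Hk') (Hd k Hk').
    apply: enc_unique; rewrite -Hpd; exact: He.
  have HpdN := dec_unique R (pes N) (pds N) (Hinv N (leqnn N)) (Hd N (leqnn N)).
  have := Hopt ord_max pdp.
  rewrite /Rbeta HpdN (val_eq0 R (pes N) _ (Hinv N (leqnn N)) (good_init R)).
  rewrite (val_per R _ (good_init R)) !ip_init /V0 /Vp /=.
  lra.
Qed.
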